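(* Let $\mathbf U$ be a real $3\times3$ positive-definite symmetric matrix, let $\hat{\mathbf e}\in\mathbb R^3$ with $|\hat{\mathbf e}|=1$, and define $\hat{\mathbf U}=(-\mathbf I+2\hat{\mathbf e}\otimes\hat{\mathbf e})\mathbf U(-\mathbf I+2\hat{\mathbf e}\otimes\hat{\mathbf e})$. Let $\hat{\mathbf R}\in\mathrm{SO}(3)$ and $\mathbf a,\mathbf n\in\mathbb R^3$ with $\mathbf a\neq 0$, $\mathbf n\neq0$ satisfy $\hat{\mathbf R}\hat{\mathbf U}=\mathbf U+\mathbf a\otimes\mathbf n$. Then the equation $$\mathbf R\big[f(\mathbf U+\mathbf a\otimes\mathbf n)+(1-f)\mathbf U\big]-\mathbf I=\mathbf b\otimes\mathbf m$$ has a solution $\mathbf R\in\mathrm{SO}(3)$, $\mathbf b,\mathbf m\in\mathbb R^3$ for each $f\in[0,1]$ if and only if the following three conditions hold: (CC1) $\lambda_2=1$, where $\lambda_2$ is the middle eigenvalue of $\mathbf U$; (CC2) $\mathbf a\cdot\mathbf U\,\mathrm{cof}(\mathbf U^2-\mathbf I)\,\mathbf n=0$; (CC3) $\mathrm{tr}\,\mathbf U^2-\det\mathbf U^2-\frac{|\mathbf a|^2|\mathbf n|^2}{4}-2\ge 0$.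
   Context: $\mathbf a\otimes\mathbf n$ denotes the matrix with $(\mathbf a\otimes\mathbf n)\mathbf x=(\mathbf n\cdot\mathbf x)\mathbf a$. For a $3\times3$ matrix $\mathbf A$, $\mathrm{cof}\,\mathbf A$ is its cofactor matrix, $(\mathrm{cof}\,\mathbf A)_{ij}=(-1)^{i+j}\det\hat{\mathbf A}_{ij}$, where $\hat{\mathbf A}_{ij}$ is the submatrix obtained by deleting row $i$ and column $j$. Conditions (CC1)–(CC3) are called the cofactor conditions. *)

(* Defs.v *)
From HB Require Import structures.
From mathcomp Require Import all_boot all_order all_algebra.
From mathcomp Require Import reals.
Set Implicit Arguments. Unset Strict Implicit. Unset Printing Implicit Defensive.
Import Order.TTheory GRing.Theory Num.Theory.
Local Open Scope ring_scope.

Section Defs.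
Variable R : realType.

Definition tens (a n : 'cV[R]_3) : 'M[R]_3 := a *m n^T.

Definition dotv (a b : 'cV[R]_3) : R := (a^T *m b) 0 0.
Definition norm2 (a : 'cV[R]_3) : R := dotv a a.

Definition cofm (A : 'M[R]_3) : 'M[R]_3 := \matrix_(i, j) cofactor A i j.

Definition is_SO3 (Q : 'M[R]_3) : Prop := Q^T *m Q = 1%:M /\ \det Q = 1.

Definition sym_posdef (U : 'M[R]_3) : Prop :=
  U^T = U /\ forall x : 'cV[R]_3, x != 0 -> 0 < dotv x (U *m x).

Definition middle_eigenvalue (U : 'M[R]_3) (l : R) : Prop :=
  exists l1 l3 : R, l1 <= l /\ l <= l3 /\
    char_poly U = ('X - l1%:P) * ('X - l%:P) * ('X - l3%:P).

End Defs.

(* Main.v *)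
Require Import Defs.
From HB Require Import structures.
From mathcomp Require Import all_boot all_order all_algebra.
From mathcomp Require Import reals.
From mathcomp Require Import ring lra.
From Stdlib Require Import Classical.
Import Order.TTheory GRing.Theory Num.Theory.
Local Open Scope ring_scope.
Set Implicit Arguments. Unset Strict Implicit. Unset Printing Implicit Defensive.


Section M3.
Variable R : realType.

Definition M3 (a b c d e f g h k : R) : 'M[R]_3 :=
  \matrix_(i, j) nth 0 (nth [::] [:: [:: a; b; c]; [:: d; e; f]; [:: g; h; k]] i) j.
Definition V3 (x y z : R) : 'cV[R]_3 := \matrix_(i, j) nth 0 [:: x; y; z] i.
Definition W3 (x y z : R) : 'rV[R]_3 := \matrix_(i, j) nth 0 [:: x; y; z] j.

Ltac cas3 i := case: i => [[|[|[|//]]] ?].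
Ltac cas1 i := case: i => [[|//] ?].

Lemma q_M3E (A : 'M[R]_3) : A = M3 (A 0 0) (A 0 1) (A 0 2) (A 1 0) (A 1 1) (A 1 2) (A 2 0) (A 2 1) (A 2 2).
Proof. apply/matrixP => i j; rewrite !mxE; cas3 i; cas3 j; congr (A _ _); exact: val_inj. Qed.
Lemma q_V3E (v : 'cV[R]_3) : v = V3 (v 0 0) (v 1 0) (v 2 0).
Proof. apply/matrixP => i j; rewrite !mxE; cas3 i; cas1 j; congr (v _ _); exact: val_inj. Qed.

Lemma q_M3eq a b c d e f g h k a' b' c' d' e' f' g' h' k' :
  a = a' -> b = b' -> c = c' -> d = d' -> e = e' -> f = f' -> g = g' -> h = h' -> k = k' ->
  M3 a b c d e f g h k = M3 a' b' c' d' e' f' g' h' k'.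
Proof. by move=> *; subst. Qed.
Lemma q_V3eq a b c a' b' c' : a = a' -> b = b' -> c = c' -> V3 a b c = V3 a' b' c'.
Proof. by move=> *; subst. Qed.

Lemma q_addM a b c d e f g h k a' b' c' d' e' f' g' h' k' :
  M3 a b c d e f g h k + M3 a' b' c' d' e' f' g' h' k' =
  M3 (a+a') (b+b') (c+c') (d+d') (e+e') (f+f') (g+g') (h+h') (k+k').
Proof. apply/matrixP => i j; rewrite !mxE; cas3 i; cas3 j. all: by []. Qed.
Lemma q_oppM a b c d e f g h k :
  - M3 a b c d e f g h k = M3 (-a) (-b) (-c) (-d) (-e) (-f) (-g) (-h) (-k).
Proof. apply/matrixP => i j; rewrite !mxE; cas3 i; cas3 j. all: by []. Qed.
Lemma q_scaleM (s : R) a b c d e f g h k :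
  s *: M3 a b c d e f g h k = M3 (s*a) (s*b) (s*c) (s*d) (s*e) (s*f) (s*g) (s*h) (s*k).
Proof. apply/matrixP => i j; rewrite !mxE; cas3 i; cas3 j. all: by []. Qed.
Lemma q_mulMM a b c d e f g h k a' b' c' d' e' f' g' h' k' :
  M3 a b c d e f g h k *m M3 a' b' c' d' e' f' g' h' k' =
  M3 (a*a'+b*d'+c*g') (a*b'+b*e'+c*h') (a*c'+b*f'+c*k')
     (d*a'+e*d'+f*g') (d*b'+e*e'+f*h') (d*c'+e*f'+f*k')
     (g*a'+h*d'+k*g') (g*b'+h*e'+k*h') (g*c'+h*f'+k*k').
Proof.
apply/matrixP => i j; rewrite !mxE !big_ord_recr big_ord0 /= !mxE /=.
cas3 i; cas3 j; rewrite /= add0r //.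
Qed.
Lemma q_trM a b c d e f g h k :
  (M3 a b c d e f g h k)^T = M3 a d g b e h c f k.
Proof. apply/matrixP => i j; rewrite !mxE; cas3 i; cas3 j. all: by []. Qed.
Lemma q_oneM : (1%:M : 'M[R]_3) = M3 1 0 0 0 1 0 0 0 1.
Proof. apply/matrixP => i j; rewrite !mxE; cas3 i; cas3 j. all: by []. Qed.
Lemma q_scalM (s : R) : (s%:M : 'M[R]_3) = M3 s 0 0 0 s 0 0 0 s.
Proof. apply/matrixP => i j; rewrite !mxE; cas3 i; cas3 j. all: by []. Qed.
Lemma q_zeroM : (0 : 'M[R]_3) = M3 0 0 0 0 0 0 0 0 0.
Proof. apply/matrixP => i j; rewrite !mxE; cas3 i; cas3 j. all: by []. Qed.
Lemma q_addV a b c a' b' c' : V3 a b c + V3 a' b' c' = V3 (a+a') (b+b') (c+c').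
Proof. apply/matrixP => i j; rewrite !mxE; cas3 i; cas1 j. all: by []. Qed.
Lemma q_oppV a b c : - V3 a b c = V3 (-a) (-b) (-c).
Proof. apply/matrixP => i j; rewrite !mxE; cas3 i; cas1 j. all: by []. Qed.
Lemma q_scaleV s a b c : s *: V3 a b c = V3 (s*a) (s*b) (s*c).
Proof. apply/matrixP => i j; rewrite !mxE; cas3 i; cas1 j. all: by []. Qed.
Lemma q_zeroV : (0 : 'cV[R]_3) = V3 0 0 0.
Proof. apply/matrixP => i j; rewrite !mxE; cas3 i; cas1 j. all: by []. Qed.
Lemma q_mulMV a b c d e f g h k x y z :
  M3 a b c d e f g h k *m V3 x y z = V3 (a*x+b*y+c*z) (d*x+e*y+f*z) (g*x+h*y+k*z).
Proof.
apply/matrixP => i j; rewrite !mxE !big_ord_recr big_ord0 /= !mxE /=.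
cas3 i; cas1 j; rewrite /= add0r //.
Qed.
Lemma q_trV x y z : (V3 x y z)^T = W3 x y z.
Proof. apply/matrixP => i j; rewrite !mxE; cas1 i; cas3 j. all: by []. Qed.
Lemma q_mulVW x y z p q r : V3 x y z *m W3 p q r = M3 (x * p) (x * q) (x * r) (y * p) (y * q) (y * r) (z * p) (z * q) (z * r).
Proof.
apply/matrixP => i j; rewrite !mxE big_ord_recr big_ord0 /= !mxE /=.
cas3 i; cas3 j; rewrite /= add0r //.
Qed.
Lemma q_mulWV x y z p q r : (W3 x y z *m V3 p q r) 0 0 = x * p + y * q + z * r.
Proof. rewrite !mxE !big_ord_recr big_ord0 /= !mxE /= add0r //. Qed.
Lemma q_detM a b c d e f g h k :
  \det (M3 a b c d e f g h k) = a*e*k - a*f*h - b*d*k + b*f*g + c*d*h - c*e*g.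
Proof.
rewrite (expand_det_row _ 0) !big_ord_recr big_ord0 /= add0r.
rewrite /cofactor !(expand_det_row _ 0) !big_ord_recr !big_ord0 /= !add0r.
rewrite /cofactor !det_mx11 !mxE /=.
rewrite !expr0 !expr1 /=. ring.
Qed.
Lemma q_trcM a b c d e f g h k : \tr (M3 a b c d e f g h k) = a + e + k.
Proof. rewrite /mxtrace !big_ord_recr big_ord0 /= !mxE /= add0r //. Qed.
Lemma q_cofM a b c d e f g h k :
  cofm (M3 a b c d e f g h k) =
  M3 (e*k - f*h) (-(d*k - f*g)) (d*h - e*g)
     (-(b*k - c*h)) (a*k - c*g) (-(a*h - b*g))
     (b*f - c*e) (-(a*f - c*d)) (a*e - b*d).
Proof.
apply/matrixP => i j; rewrite !mxE /cofactor (expand_det_row _ 0) !big_ord_recr big_ord0 /= add0r.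
rewrite /cofactor !det_mx11 !mxE /=.
cas3 i; cas3 j; rewrite /= ?expr0 ?expr1 /=; ring.
Qed.
Lemma q_M3inj a b c d e f g h k a' b' c' d' e' f' g' h' k' :
  M3 a b c d e f g h k = M3 a' b' c' d' e' f' g' h' k' ->
  a = a' /\ b = b' /\ c = c' /\ d = d' /\ e = e' /\ f = f' /\ g = g' /\ h = h' /\ k = k'.
Proof.
move/matrixP=> H.
have := H 0 0; have := H 0 1; have := H 0 2; have := H 1 0; have := H 1 1; have := H 1 2;
have := H 2 0; have := H 2 1; have := H 2 2; rewrite !mxE /=.
by move=> *; repeat split.
Qed.
Lemma q_V3inj a b c a' b' c' : V3 a b c = V3 a' b' c' -> a = a' /\ b = b' /\ c = c'.
Proof.
move/matrixP=> H.
have := H 0 0; have := H 1 0; have := H 2 0; rewrite !mxE /=.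
by move=> *; repeat split.
Qed.
Lemma q_M3Es (A : 'M[R]_3) : A^T = A ->
  A = M3 (A 0 0) (A 0 1) (A 0 2) (A 0 1) (A 1 1) (A 1 2) (A 0 2) (A 1 2) (A 2 2).
Proof.
move=> hA.
have e10 := congr1 (fun M : 'M[R]_3 => M 1 0) hA; have e20 := congr1 (fun M : 'M[R]_3 => M 2 0) hA;
have e21 := congr1 (fun M : 'M[R]_3 => M 2 1) hA; rewrite /= !mxE in e10 e20 e21.
by rewrite {1}(q_M3E A) -e10 -e20 -e21.
Qed.
Lemma q_V3e0 x y z : (V3 x y z) 0 0 = x. Proof. by rewrite mxE. Qed.
Lemma q_V3e1 x y z : (V3 x y z) 1 0 = y. Proof. by rewrite mxE. Qed.
Lemma q_V3e2 x y z : (V3 x y z) 2 0 = z. Proof. by rewrite mxE. Qed.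
End M3.


Ltac m3simp := rewrite ?(q_addM, q_oppM, q_scaleM, q_mulMM, q_trM, q_oneM, q_scalM, q_zeroM, q_addV, q_oppV, q_scaleV, q_zeroV,
  q_mulMV, q_trV, q_mulVW, q_mulWV, q_detM, q_trcM, q_cofM, q_V3e0, q_V3e1, q_V3e2).

Section P1.
Variable R : realType.
Implicit Types (S A : 'M[R]_3) (u v w z : 'cV[R]_3).

Definition sig2 S := \tr (cofm S).
Definition sk z := M3 0 (- z 2 0) (z 1 0) (z 2 0) 0 (- z 0 0) (- z 1 0) (z 0 0) 0.

Lemma norm2_ge0 v : 0 <= norm2 v.
Proof. rewrite /norm2 /dotv (q_V3E v); m3simp. nra. Qed.

Lemma norm2_eq0 v : norm2 v = 0 -> v = 0.
Proof.
rewrite /norm2 /dotv (q_V3E v); m3simp => h.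
apply: q_V3eq; nra.
Qed.

Lemma gram_ge0 v w : 0 <= norm2 v * norm2 w - dotv v w ^+ 2.
Proof.
rewrite /norm2 /dotv (q_V3E v) (q_V3E w); m3simp.
set x0 := v 0 0; set x1 := v 1 0; set x2 := v 2 0.
set y0 := w 0 0; set y1 := w 1 0; set y2 := w 2 0.
have -> : (x0 * x0 + x1 * x1 + x2 * x2) * (y0 * y0 + y1 * y1 + y2 * y2) -
  (x0 * y0 + x1 * y1 + x2 * y2) ^+ 2 =
  (x0 * y1 - x1 * y0) ^+ 2 + (x0 * y2 - x2 * y0) ^+ 2 + (x1 * y2 - x2 * y1) ^+ 2 by ring.
by rewrite !addr_ge0 ?sqr_ge0.
Qed.

Lemma tens_tr v w : (tens v w)^T = tens w v.
Proof. by rewrite /tens trmx_mul trmxK. Qed.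

Lemma POL S : S^T = S -> (forall u, dotv u (S *m u) = 0) -> S = 0.
Proof.
move=> hS H.
have h1 := H (V3 1 0 0); have h2 := H (V3 0 1 0); have h3 := H (V3 0 0 1).
have h4 := H (V3 1 1 0); have h5 := H (V3 1 0 1); have h6 := H (V3 0 1 1).
move: h1 h2 h3 h4 h5 h6; rewrite /dotv (q_M3Es hS); m3simp => h1 h2 h3 h4 h5 h6.
rewrite ?q_zeroM; apply: q_M3eq; lra.
Qed.

Lemma ID2 A z : A^T = A ->
  dotv z (A *m z) *: A - tens (A *m z) (A *m z) = - (sk z *m cofm A *m sk z).
Proof.
move=> hA; rewrite /sk /tens /dotv (q_M3Es hA) (q_V3E z); m3simp.
by apply: q_M3eq; ring.
Qed.

Lemma ADJ S u : S^T = S ->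
  cofm (dotv u (S *m u) *: S - tens (S *m u) (S *m u)) = (dotv u (S *m u) * \det S) *: tens u u.
Proof.
move=> hS; rewrite /tens /dotv (q_M3Es hS) (q_V3E u); m3simp.
by apply: q_M3eq; ring.
Qed.

End P1.
Section P1b.
Variable R : realType.
Implicit Types (S A : 'M[R]_3) (u v w z : 'cV[R]_3).

Lemma RANK1 A : A^T = A -> cofm A = 0 -> exists k v, A = k *: tens v v.
Proof.
move=> hA hc.
case: (classic (forall u, dotv u (A *m u) = 0)) => [H|H].
  by exists 0, 0; rewrite scale0r; exact: POL hA H.
have [z hz] : exists z, dotv z (A *m z) != 0.
  by case: (not_all_ex_not _ _ H) => z hz; exists z; apply/eqP.
exists (dotv z (A *m z))^-1, (A *m z).
have := ID2 z hA; rewrite hc mulmx0 mul0mx oppr0 => /eqP; rewrite subr_eq0 => /eqP <-.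
by rewrite scalerA mulVf // scale1r.
Qed.

Lemma dotv0 u : dotv u 0 = 0.
Proof. by rewrite /dotv mulmx0 mxE. Qed.

Lemma FACT S : S^T = S -> \det S = 0 -> sig2 S <= 0 -> exists m c, S = tens m c + tens c m.
Proof.
move=> hS hd hsig.
case: (classic (forall u, dotv u (S *m u) = 0)) => [H|H].
  by exists 0, 0; rewrite /tens !mul0mx addr0; exact: POL hS H.
have [u hu] : exists u, dotv u (S *m u) != 0.
  by case: (not_all_ex_not _ _ H) => z hz; exists z; apply/eqP.
have hc : cofm (dotv u (S *m u) *: S - tens (S *m u) (S *m u)) = 0.
  by rewrite ADJ // hd mulr0 scale0r.
have hT : (dotv u (S *m u) *: S - tens (S *m u) (S *m u))^T =
   dotv u (S *m u) *: S - tens (S *m u) (S *m u).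
  by rewrite linearB /= linearZ /= hS tens_tr.
have [k [v hk]] := RANK1 hT hc.
move: hu hk; set s := dotv u (S *m u); set w := S *m u => hu hk.
have hSe : S = s^-1 *: (tens w w + k *: tens v v).
  by rewrite -hk addrC subrK scalerA mulVf // scale1r.
case: (lerP k 0) => hk0.
  set r := Num.sqrt (- k).
  have hr : k = - r ^+ 2 by rewrite sqr_sqrtr ?oppr_ge0 // opprK.
  exists ((2 * s)^-1 *: (w - r *: v)), (w + r *: v).
  rewrite hSe hr /tens (q_V3E w) (q_V3E v); m3simp.
  by apply: q_M3eq; field.
have hsig2 : k * (norm2 w * norm2 v - dotv w v ^+ 2) = s ^+ 2 * sig2 S.
  have : sig2 (s *: S) = s ^+ 2 * sig2 S.
    by rewrite /sig2 (q_M3E S); m3simp; ring.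
  have hsS : s *: S = tens w w + k *: tens v v by rewrite -hk addrC subrK.
  rewrite hsS => <-.
  rewrite /sig2 /tens /norm2 /dotv (q_V3E w) (q_V3E v); m3simp; ring.
have hG : norm2 w * norm2 v - dotv w v ^+ 2 = 0.
  have h1 := gram_ge0 w v.
  have h2 : 0 <= s ^+ 2 by rewrite sqr_ge0.
  nra.
have hw : norm2 w != 0.
  apply/eqP => /norm2_eq0 hw0; move: hu; rewrite /s -/w hw0 dotv0 eqxx //.
set t := dotv w v / norm2 w.
have hv : v = t *: w.
  have e1 : norm2 (v - t *: w) = norm2 v - 2 * t * dotv w v + t ^+ 2 * norm2 w.
    by rewrite /norm2 /dotv (q_V3E w) (q_V3E v); m3simp; ring.
  have e2 : norm2 (v - t *: w) = 0.
    rewrite e1 /t; move: hG hw; set N := norm2 w; set D := dotv w v => hG hw.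
    have -> : norm2 v = D ^+ 2 / N.
      have -> : norm2 v = (N * norm2 v - D ^+ 2 + D ^+ 2) / N by field.
      by rewrite hG add0r.
    by field.
  by move/norm2_eq0: e2 => /eqP; rewrite subr_eq0 => /eqP.
exists (((1 + k * t ^+ 2) / (2 * s)) *: w), w.
rewrite hSe hv /tens (q_V3E w); m3simp.
by apply: q_M3eq; field.
Qed.
End P1b.



Section P2.
Variable R : realType.
Implicit Types (S A C F Q : 'M[R]_3) (u v w z b m c : 'cV[R]_3).

Lemma NEC Q F b m : Q^T *m Q = 1%:M -> Q *m F - 1%:M = tens b m ->
  \det (F^T *m F - 1%:M) = 0 /\ \det (F^T *m F) - \tr (F^T *m F) + 2%:R <= 0.
Proof.
move=> hQ hF.
have hQF : Q *m F = 1%:M + tens b m by rewrite -hF addrCA subrr addr0.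
have hC : F^T *m F = (1%:M + tens b m)^T *m (1%:M + tens b m).
  by rewrite -hQF trmx_mul -mulmxA (mulmxA Q^T) hQ mul1mx.
have e : \det ((1%:M + tens b m)^T *m (1%:M + tens b m)) -
   \tr ((1%:M + tens b m)^T *m (1%:M + tens b m)) + 2%:R = dotv b m ^+ 2 - norm2 b * norm2 m.
  by rewrite /tens /norm2 /dotv (q_V3E b) (q_V3E m); m3simp; ring.
rewrite hC e; split.
  by rewrite /tens (q_V3E b) (q_V3E m); m3simp; ring.
have := gram_ge0 b m; lra.
Qed.

Lemma SUFF F : 0 < \det F -> \det (F^T *m F - 1%:M) = 0 ->
  \det (F^T *m F) - \tr (F^T *m F) + 2%:R <= 0 ->
  exists Q b m, is_SO3 Q /\ Q *m F - 1%:M = tens b m.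
Proof.
move=> hdF hD hE.
have hST : (F^T *m F - 1%:M)^T = F^T *m F - 1%:M.
  by rewrite linearB /= trmx_mul trmxK trmx1.
have hsig : sig2 (F^T *m F - 1%:M) <= 0.
  have e : \det (F^T *m F) - \tr (F^T *m F) + 2%:R =
     sig2 (F^T *m F - 1%:M) + \det (F^T *m F - 1%:M).
    by rewrite /sig2 (q_M3E (F^T *m F)); m3simp; ring.
  move: hE; rewrite e hD addr0 //.
have [m [c hmc]] := FACT hST hD hsig.
have hdC : \det (F^T *m F) = \det F ^+ 2 by rewrite det_mulmx det_tr expr2.
have hCe : F^T *m F = 1%:M + (tens m c + tens c m) by rewrite -hmc addrCA subrr addr0.
have [b [m' [h1 h2]]] : exists b m', (1%:M + tens b m')^T *m (1%:M + tens b m') = F^T *m F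
   /\ \det (1%:M + tens b m') = \det F.
  case: (eqVneq m 0) => hm.
    have hC1 : F^T *m F = 1%:M by rewrite hCe hm /tens !mul0mx trmx0 mulmx0 !addr0.
    have hd1 : \det F = 1.
      have : \det F ^+ 2 = 1 by rewrite -hdC hC1 det1.
      nra.
    by exists 0, 0; rewrite /tens mul0mx addr0 trmx1 mulmx1 det1 hd1 hC1.
  have hA : 0 < norm2 m.
    rewrite lt_def norm2_ge0 andbT; apply/eqP => /norm2_eq0 h; by rewrite h eqxx in hm.
  set A := norm2 m in hA *; set d := \det F in hdF hdC *.
  have hd2 : d ^+ 2 = (dotv c m + 1) ^+ 2 - A * norm2 c.
    rewrite -hdC hCe /A /tens /norm2 /dotv (q_V3E m) (q_V3E c); m3simp; ring.
  have hA0 : A != 0 by rewrite gt_eqF.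
  set t := (dotv c m + 1 - d) / A.
  exists (c - t *: m), m; split.
    have e1 : (1%:M + tens (c - t *: m) m)^T *m (1%:M + tens (c - t *: m) m) =
      1%:M + (tens m c + tens c m) + (norm2 (c - t *: m) - 2 * t) *: tens m m.
      by rewrite /tens /norm2 /dotv (q_V3E m) (q_V3E c); m3simp; apply: q_M3eq; ring.
    have e2 : norm2 (c - t *: m) - 2 * t = 0.
      have -> : norm2 (c - t *: m) = norm2 c - 2 * t * dotv c m + t ^+ 2 * A.
        by rewrite /A /norm2 /dotv (q_V3E m) (q_V3E c); m3simp; ring.
      rewrite /t; move: hd2 hA0; set B := dotv c m; set N := norm2 c => hd2 hA0.
      have -> : N - 2 * ((B + 1 - d) / A) * B + ((B + 1 - d) / A) ^+ 2 * A - 2 * ((B + 1 - d) / A)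
        = (d ^+ 2 - ((B + 1) ^+ 2 - A * N)) / A by field.
      by rewrite hd2 subrr mul0r.
    by rewrite e1 e2 scale0r addr0 hCe.
  have -> : \det (1%:M + tens (c - t *: m) m) = dotv c m + 1 - t * A.
    by rewrite /A /tens /norm2 /dotv (q_V3E m) (q_V3E c); m3simp; ring.
  by rewrite /t; field.
have hU : F \in unitmx by rewrite unitmxE unitfE gt_eqF.
exists ((1%:M + tens b m') *m invmx F), b, m'; split; first split.
- rewrite trmx_mul -mulmxA (mulmxA (1%:M + tens b m')^T) h1 !mulmxA -trmx_mul mulmxV //.
  by rewrite trmx1 mul1mx mulmxV.
- by rewrite det_mulmx h2 det_inv mulfV // gt_eqF.
- by rewrite -mulmxA mulVmx // mulmx1 [1%:M + _]addrC addrK.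
Qed.
End P2.



Definition ent {T : Type} {m n : nat} (A : 'M[T]_(m.+1, n.+1)) (i j : nat) := A (inord i) (inord j).
Arguments ent : simpl never.
Lemma entE {T : Type} {m n : nat} (A : 'M[T]_(m.+1,n.+1)) i j : A i j = ent A i j.
Proof. by rewrite /ent !inord_val. Qed.
Ltac normidx := repeat match goal with |- context [ent ?A ?x ?y] =>
  let x' := eval compute in x in let y' := eval compute in y in
  progress change (ent A x y) with (ent A x' y') end.

Lemma det3 (T : comNzRingType) (A : 'M[T]_3) : \det A =
  A 0 0 * A 1 1 * A 2 2 - A 0 0 * A 1 2 * A 2 1 - A 0 1 * A 1 0 * A 2 2
  + A 0 1 * A 1 2 * A 2 0 + A 0 2 * A 1 0 * A 2 1 - A 0 2 * A 1 1 * A 2 0.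
Proof.
rewrite (expand_det_row _ 0) !big_ord_recr big_ord0 /= add0r.
rewrite /cofactor !(expand_det_row _ 0) !big_ord_recr !big_ord0 /= !add0r.
rewrite /cofactor !det_mx11 !mxE /=.
rewrite !(entE A) /=. normidx.
ring.
Qed.

Section P3.
Variable R : realType.
Lemma CP3 (A : 'M[R]_3) : char_poly A = 'X^3 - (\tr A)%:P * 'X^2 + (sig2 A)%:P * 'X - (\det A)%:P.
Proof.
have -> : \tr A = A 0 0 + A 1 1 + A 2 2 by rewrite [in LHS](q_M3E A); m3simp; ring.
have -> : sig2 A = (A 1 1 * A 2 2 - A 1 2 * A 2 1) + (A 0 0 * A 2 2 - A 0 2 * A 2 0)
   + (A 0 0 * A 1 1 - A 0 1 * A 1 0) by rewrite /sig2 [in LHS](q_M3E A); m3simp; ring.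
rewrite /char_poly /char_poly_mx !det3 !mxE /= ?mulr1n ?mulr0n.
rewrite !(polyCD, polyCN, polyCB, polyCM).
ring.
Qed.

Lemma V3nz (x y z : R) : z != 0 -> V3 x y z != 0.
Proof. by move=> hz; apply/eqP; rewrite q_zeroV => /q_V3inj [_ [_ h]]; rewrite h eqxx in hz. Qed.
Lemma V3nzx (x y z : R) : x != 0 -> V3 x y z != 0.
Proof. by move=> hz; apply/eqP; rewrite q_zeroV => /q_V3inj [h _]; rewrite h eqxx in hz. Qed.
Lemma V3nzy (x y z : R) : y != 0 -> V3 x y z != 0.
Proof. by move=> hz; apply/eqP; rewrite q_zeroV => /q_V3inj [_ [h _]]; rewrite h eqxx in hz. Qed.

Lemma PD_aux (a b c d e f : R) :
  (forall x, x != 0 -> 0 < dotv x (M3 a b c b d e c e f *m x)) -> 0 < \det (M3 a b c b d e c e f).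
Proof.
move=> hP.
have h0 := hP (V3 1 0 0) (V3nzx _ _ (oner_neq0 R)).
have h1 := hP (V3 0 1 0) (V3nzy _ _ (oner_neq0 R)).
move: h0 h1; rewrite /dotv; m3simp => h0 h1.
have hm : 0 < a * d - b * b.
  have hd : d != 0 by rewrite gt_eqF //; lra.
  have := hP (V3 d (- b) 0) (V3nzx _ _ hd); rewrite /dotv; m3simp => h2.
  have ee : d * (a * d - b * b) = d * (a * d + b * - b + c * 0) + - b * (b * d + d * - b + e * 0) +
    0 * (c * d + e * - b + f * 0) by ring.
  rewrite -ee in h2. nra.
have hm0 : a * d - b * b != 0 by rewrite gt_eqF.
have := hP (V3 (b * e - c * d) (- (a * e - c * b)) (a * d - b * b)) (V3nz _ _ hm0).
rewrite /dotv; m3simp => h3.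
have e3 : (a * d * f - a * e * e - b * b * f + b * e * c + c * b * e - c * d * c) * (a * d - b * b) =
  (b * e - c * d) * (a * (b * e - c * d) + b * - (a * e - c * b) + c * (a * d - b * b)) +
  - (a * e - c * b) * (b * (b * e - c * d) + d * - (a * e - c * b) + e * (a * d - b * b)) +
  (a * d - b * b) * (c * (b * e - c * d) + e * - (a * e - c * b) + f * (a * d - b * b)) by ring.
nra.
Qed.

Lemma PD_det (V : 'M[R]_3) : sym_posdef V -> 0 < \det V.
Proof. case=> hT hP; rewrite (q_M3Es hT) in hP *; exact: PD_aux. Qed.

Lemma PD_shift (V : 'M[R]_3) : sym_posdef V -> sym_posdef (V + 1%:M).
Proof.
case=> hT hP; split; first by rewrite linearD /= hT trmx1.
move=> x hx; have := hP x hx; have := norm2_ge0 x.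
have -> : dotv x ((V + 1%:M) *m x) = dotv x (V *m x) + norm2 x.
  by rewrite /dotv /norm2 mulmxDl mul1mx mulmxDr mxE.
lra.
Qed.

Lemma detUU1 (U : 'M[R]_3) : \det (U *m U - 1%:M) = \det (U - 1%:M) * \det (U + 1%:M).
Proof. by rewrite (q_M3E U); m3simp; ring. Qed.
Lemma detU1m (U : 'M[R]_3) : \det (U - 1%:M) = \det U - sig2 U + \tr U - 1.
Proof. by rewrite /sig2 (q_M3E U); m3simp; ring. Qed.
Lemma detU1p (U : 'M[R]_3) : \det (U + 1%:M) = 1 + \tr U + sig2 U + \det U.
Proof. by rewrite /sig2 (q_M3E U); m3simp; ring. Qed.
Lemma EUU (U : 'M[R]_3) :
  \det (U *m U) - \tr (U *m U) + 2%:R = \det U ^+ 2 - (\tr U ^+ 2 - 2 * sig2 U) + 2.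
Proof. by rewrite /sig2 (q_M3E U); m3simp; ring. Qed.

Lemma MID (U : 'M[R]_3) : sym_posdef U -> \det (U *m U - 1%:M) = 0 ->
  \det (U *m U) - \tr (U *m U) + 2%:R <= 0 -> middle_eigenvalue U 1.
Proof.
move=> hU hD hE.
have hp : 0 < \det (U + 1%:M) := PD_det (PD_shift hU).
rewrite /middle_eigenvalue CP3.
move: hE hp hD; rewrite detUU1 EUU detU1p detU1m.
set t := \tr U; set s := sig2 U; set d := \det U => hE hp hD.
have hs : s = t - 1 + d.
  move/eqP: hD; rewrite mulf_eq0 => /orP [/eqP h|/eqP h]; lra.
rewrite hs in hE hp.
have hq : 2 - t + d <= 0 by nra.
set p := t - 1; set D := p ^+ 2 - 4 * d.
have hD0 : (p - 2) ^+ 2 <= D by rewrite /D /p; nra.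
have hD1 : 0 <= D by have := sqr_ge0 (p - 2); lra.
set r := Num.sqrt D.
have hr : r ^+ 2 = D by rewrite sqr_sqrtr.
have hr0 : 0 <= r by rewrite sqrtr_ge0.
exists ((p - r) / 2), ((p + r) / 2); split; [|split].
- nra.
- nra.
- have ht : t = (p - r) / 2 + (p + r) / 2 + 1 by rewrite /p; field.
  have hd : d = (p - r) / 2 * ((p + r) / 2).
    have -> : (p - r) / 2 * ((p + r) / 2) = (p ^+ 2 - r ^+ 2) / 4 by field.
    by rewrite hr /D; field.
  move: ht hd; clearbody r p; set l1 := (p - r) / 2; set l3 := (p + r) / 2 => ht hd.
  rewrite hs ht hd !(polyCD, polyCN, polyCB, polyCM); ring.
Qed.

Lemma MID_rev (U : 'M[R]_3) : middle_eigenvalue U 1 -> \det (U *m U - 1%:M) = 0.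
Proof.
case=> l1 [l3 [_ [_ hcp]]].
have h1 : (char_poly U).[1] = 0 by rewrite hcp !hornerE; ring.
rewrite CP3 !hornerE /= ?expr1n ?mulr1 in h1.
rewrite detUU1 detU1m; have -> : \det U - sig2 U + \tr U - 1 = 0 by lra.
by rewrite mul0r.
Qed.
End P3.



Section P4.
Variable R : realType.
Implicit Types (S U X : 'M[R]_3) (a n w x y : 'cV[R]_3).

Lemma Ff_eq U a n (f : R) : f *: (U + tens a n) + (1 - f) *: U = U + f *: tens a n.
Proof. rewrite /tens (q_M3E U) (q_V3E a) (q_V3E n); m3simp; apply: q_M3eq; ring. Qed.

Lemma detF U a n (f : R) : \det (U + f *: tens a n) = \det U + f * (\det (U + tens a n) - \det U).
Proof. rewrite /tens (q_M3E U) (q_V3E a) (q_V3E n); m3simp; ring. Qed.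

Lemma trC U a n (f : R) : U^T = U ->
  \tr ((U + f *: tens a n)^T *m (U + f *: tens a n)) =
  \tr (U *m U) + f * (2 * dotv a (U *m n)) + f ^+ 2 * (norm2 a * norm2 n).
Proof. move=> hU; rewrite /tens /norm2 /dotv (q_M3Es hU) (q_V3E a) (q_V3E n); m3simp; ring. Qed.

Lemma Cf_eq U a n (f : R) : U^T = U ->
  (U + f *: tens a n)^T *m (U + f *: tens a n) - 1%:M =
  (U *m U - 1%:M) + f *: (tens (U *m a) n + tens n (U *m a)) + f ^+ 2 *: (norm2 a *: tens n n).
Proof.
move=> hU; rewrite /tens /norm2 /dotv (q_M3Es hU) (q_V3E a) (q_V3E n); m3simp; apply: q_M3eq; ring.
Qed.

Lemma Dpoly S w n (al f : R) :
  \det (S + f *: (tens w n + tens n w) + f^+2 *: (al *: tens n n)) =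
  \det S + f * (dotv w (cofm S *m n) + dotv n (cofm S *m w)) +
  f^+2 * (\det (S + (tens w n + tens n w) + al *: tens n n) - \det S -
          (dotv w (cofm S *m n) + dotv n (cofm S *m w))).
Proof. rewrite /tens /dotv (q_M3E S) (q_V3E w) (q_V3E n); m3simp; ring. Qed.

Lemma cofsym S x y : S^T = S -> dotv x (cofm S *m y) = dotv y (cofm S *m x).
Proof. move=> hS; rewrite /dotv (q_M3Es hS) (q_V3E x) (q_V3E y); m3simp; ring. Qed.

Lemma dotU U X a n : U^T = U -> dotv (U *m a) (X *m n) = dotv a (U *m X *m n).
Proof. by move=> hU; rewrite /dotv trmx_mul hU !mulmxA. Qed.

Lemma Dform U a n (f : R) : U^T = U ->
  let D := fun f : R => \det ((U + f *: tens a n)^T *m (U + f *: tens a n) - 1%:M) in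
  let cc2 := dotv a (U *m cofm (U *m U - 1%:M) *m n) in
  D f = D 0 + f * (2 * cc2) + f ^+ 2 * (D 1 - D 0 - 2 * cc2).
Proof.
move=> hU D cc2; rewrite /D !Cf_eq // Dpoly scale0r expr0n /= !scale0r !addr0 scale1r expr1n scale1r.
have hS : (U *m U - 1%:M)^T = U *m U - 1%:M by rewrite linearB /= trmx_mul hU trmx1.
have hk : dotv n (cofm (U *m U - 1%:M) *m (U *m a)) = cc2 by rewrite -(cofsym _ _ hS) dotU.
rewrite hk dotU // -/cc2; clearbody cc2; ring.
Qed.
End P4.

Theorem theorem1 (R : realType) (U : 'M[R]_3) (e : 'cV[R]_3)
    (Rh : 'M[R]_3) (a n : 'cV[R]_3) :
  sym_posdef U ->
  norm2 e = 1 ->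
  is_SO3 Rh ->
  a != 0 -> n != 0 ->
  Rh *m ((- 1%:M + 2%:R *: tens e e) *m U *m (- 1%:M + 2%:R *: tens e e))
    = U + tens a n ->
  (forall f : R, 0 <= f <= 1 ->
     exists (Q : 'M[R]_3) (b m : 'cV[R]_3),
       is_SO3 Q /\
       Q *m (f *: (U + tens a n) + (1 - f) *: U) - 1%:M = tens b m)
  <->
  (middle_eigenvalue U 1 /\
   dotv a (U *m cofm (U *m U - 1%:M) *m n) = 0 /\
   \tr (U *m U) - \det (U *m U) - norm2 a * norm2 n / 4%:R - 2%:R >= 0).
Proof.
move=> hU he [hRh hdRh] ha hn htw.
have [hUT hUP] := hU.
move: htw; set Q := - 1%:M + 2%:R *: tens e e => htw.
have hQT : Q^T = Q by rewrite /Q /tens (q_V3E e); m3simp; apply: q_M3eq; ring.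
have hQQ : Q *m Q = 1%:M.
  have : Q *m Q = 1%:M + (4 * (norm2 e - 1)) *: tens e e.
    by rewrite /Q /tens /norm2 /dotv (q_V3E e); m3simp; apply: q_M3eq; ring.
  by rewrite he subrr mulr0 scale0r addr0.
have hdQ : \det Q = 1.
  have : \det Q = 2 * norm2 e - 1 by rewrite /Q /tens /norm2 /dotv (q_V3E e); m3simp; ring.
  by rewrite he => ->; lra.
have hdU : 0 < \det U := PD_det hU.
have Tw1 : \det (U + tens a n) = \det U by rewrite -htw !det_mulmx hdRh hdQ !mul1r mulr1.
have Tw2 : (U + tens a n)^T *m (U + tens a n) = Q *m (U *m U) *m Q.
  have hRX : forall X : 'M[R]_3, (Rh *m X)^T *m (Rh *m X) = X^T *m X.
    by move=> X; rewrite trmx_mul mulmxA -(mulmxA X^T) hRh mulmx1.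
  rewrite -htw hRX !trmx_mul hQT hUT !mulmxA.
  by rewrite -(mulmxA (Q *m U) Q Q) hQQ mulmx1.
have TwT : 2 * dotv a (U *m n) = - (norm2 a * norm2 n).
  have := trC a n 1 hUT; rewrite scale1r Tw2 mxtrace_mulC mulmxA hQQ mul1mx expr1n !mul1r.
  move=> h; lra.
have hdet : forall f, \det (U + f *: tens a n) = \det U.
  by move=> f; rewrite detF Tw1 subrr mulr0 addr0.
have hE : forall f : R, \det ((U + f *: tens a n)^T *m (U + f *: tens a n)) -
    \tr ((U + f *: tens a n)^T *m (U + f *: tens a n)) + 2%:R =
    \det U ^+ 2 - \tr (U *m U) + 2 + (norm2 a * norm2 n) * (f - f ^+ 2).
  by move=> f; rewrite det_mulmx det_tr hdet trC // TwT; ring.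
set cc2 := dotv a (U *m cofm (U *m U - 1%:M) *m n).
pose D := fun f : R => \det ((U + f *: tens a n)^T *m (U + f *: tens a n) - 1%:M).
have hD : forall f, D f = D 0 + f * (2 * cc2) + f ^+ 2 * (D 1 - D 0 - 2 * cc2).
  by move=> f; exact: (Dform a n f hUT).
have hD1 : D 1 = D 0.
  rewrite /D scale1r Tw2 scale0r addr0 hUT.
  have -> : Q *m (U *m U) *m Q - 1%:M = Q *m (U *m U - 1%:M) *m Q.
    by rewrite mulmxBr mulmx1 mulmxBl hQQ.
  by rewrite !det_mulmx hdQ mul1r mulr1.
have hD0e : D 0 = \det (U *m U - 1%:M) by rewrite /D scale0r addr0 hUT.
split.
- move=> H.
  have hN : forall f, 0 <= f <= 1 -> D f = 0 /\
      \det ((U + f *: tens a n)^T *m (U + f *: tens a n)) -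
      \tr ((U + f *: tens a n)^T *m (U + f *: tens a n)) + 2%:R <= 0.
    move=> f hf; have [Q' [b [m [[hQ' _] hF]]]] := H f hf.
    rewrite Ff_eq in hF; exact: NEC hQ' hF.
  have h00 : (0 : R) <= (0 : R) <= (1 : R) by apply/andP; split; lra.
  have [hD0 hE0] := hN 0 h00.
  have hh : (0 : R) <= (2^-1 : R) <= (1 : R) by apply/andP; split; lra.
  have [hDh hEh] := hN 2^-1 hh.
  split; [|split].
  + apply: MID => //; first by rewrite -hD0e.
    by move: hE0; rewrite scale0r addr0 hUT.
  + have := hD 2^-1; rewrite hDh hD1 hD0 => h.
    rewrite -/cc2; lra.
  + move: hEh; rewrite hE det_mulmx => h; lra.
- case=> hC1 [hC2 hC3] f hf.
  rewrite Ff_eq; apply: SUFF.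
  + by rewrite hdet.
  + have hD0 : D 0 = 0 by rewrite hD0e MID_rev.
    change (D f = 0); rewrite hD hD1 hD0 hC2; ring.
  + rewrite hE; move: hC3; rewrite det_mulmx => h.
    have h1 : 0 <= norm2 a * norm2 n by rewrite mulr_ge0 // norm2_ge0.
    have h2 : 0 <= (norm2 a * norm2 n) * (f - 2^-1) ^+ 2 by rewrite mulr_ge0 // sqr_ge0.
    nra.
Qed.
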